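(* Let $\rho_0=\sqrt{1+e^{W_0(2/e^2)+2}}$ and let $b\mapsto\rho_b$ ($b\ge0$) be the solution of the ordinary differential equation $\frac{d}{db}\rho_b=\frac{\rho_b}{2\rho_b+b}\left(1-\frac{2}{\rho_b^2+1}\right)$ with initial value $\rho_0$ at $b=0$. Then for every $b>0$, $$\max\left(\rho_0,\ \frac45\cdot\frac{b}{2W_0\!\left(\frac{b}{2\rho_0}\right)}\right)\le\rho_b\le\frac{b}{2W_0\!\left(\frac{b}{2\rho_0}\right)}.$$
   Context: $W_0$ is the principal branch of the Lambert W function: for $z>-1/e$, $W_0(z)$ is the unique $w>-1$ with $we^w=z$. *)

(* Defs.v *)
From Stdlib Require Import Reals Lra ClassicalEpsilon.
From Coquelicot Require Import Coquelicot.
Open Scope R_scope.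

(* Defined via Hilbert's epsilon; outside
   the domain z > -1/e its value is unspecified (never used there). *)
Definition W0 (z : R) : R :=
  epsilon (inhabits 0) (fun w => -1 < w /\ w * exp w = z).

Definition rho0 : R := sqrt (1 + exp (W0 (2 / (exp 1) ^ 2) + 2)).

Definition ode_rhs (b r : R) : R := r / (2 * r + b) * (1 - 2 / (r ^ 2 + 1)).

(* Main.v *)
Require Import Defs.
From Stdlib Require Import Reals Lra Psatz Classical ClassicalEpsilon.
From Coquelicot Require Import Coquelicot.
Open Scope R_scope.

Lemma der_cont (g : R -> R) (x l : R) : is_derive g x l ->
  forall eps, 0 < eps -> exists d, 0 < d /\ forall y, Rabs (y - x) < d -> Rabs (g y - g x) < eps.
Proof.
  intros H eps He. apply is_derive_Reals in H.
  assert (Hc : continuity_pt g x) by (apply derivable_continuous_pt; exists l; exact H).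
  destruct (Hc eps He) as [d [Hd Hy]]. exists d; split; auto.
  intros y Hyx. destruct (Req_dec y x) as [->|Hne].
  - rewrite Rminus_eq_0, Rabs_R0; auto.
  - apply Hy. split. split. exact I. auto. exact Hyx.
Qed.

Lemma der_neg_left (g : R -> R) (x l : R) : is_derive g x l -> l < 0 ->
  exists d, 0 < d /\ forall y, x - d < y < x -> g x < g y.
Proof.
  intros H Hl. apply is_derive_Reals in H.
  destruct (H (- l / 2)) as [d Hd]; [lra|].
  exists d. split. apply cond_pos. intros y Hy.
  assert (Hh : y - x <> 0) by lra.
  assert (Ha : Rabs (y - x) < d) by (rewrite Rabs_left; lra).
  specialize (Hd (y - x) Hh Ha). replace (x + (y - x)) with y in Hd by ring.
  apply Rabs_def2 in Hd. destruct Hd as [Hd _].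
  assert (Hq : (g y - g x) / (y - x) < 0) by lra.
  assert (Hyx : y - x < 0) by lra.
  destruct (Rlt_or_le (g x) (g y)) as [h|h]; auto.
  exfalso. assert (Heq: (g y - g x)/(y-x) * (y - x) = g y - g x) by (field; lra). nra.
Qed.

Lemma derive_of (g : R -> R) x : (exists l, is_derive g x l) -> is_derive g x (Derive g x).
Proof. intros [l Hl]. rewrite (is_derive_unique g x l Hl). exact Hl. Qed.

Lemma start_neg (g : R -> R) (d : R) : 0 < d ->
  (forall t, 0 < t < d -> exists l, is_derive g t l /\ l < 0) ->
  (forall eps, 0 < eps -> exists eta, 0 < eta /\ forall t, 0 < t < eta -> g t < eps) ->
  forall t, 0 < t < d -> g t < 0.
Proof.
  intros Hd Hder Hlim.
  assert (Hdec : forall s t, 0 < s < t -> t < d -> g t < g s).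
  { intros s t Hs Ht.
    destruct (MVT_cor2 g (Derive g) s t) as [c [Hc1 Hc2]]; [lra| |].
    - intros c Hc. apply is_derive_Reals, derive_of.
      destruct (Hder c) as [l [Hl _]]; [lra|]. now exists l.
    - destruct (Hder c) as [l [Hl Hl0]]; [lra|].
      rewrite (is_derive_unique g c l Hl) in Hc1. nra. }
  intros t Ht.
  assert (Hh : g (t/2) <= 0).
  { destruct (Rle_or_lt (g (t/2)) 0) as [h|h]; auto. exfalso.
    destruct (Hlim (g (t/2)) h) as [eta [He Heta]].
    set (s := Rmin eta (t/2) / 2).
    assert (0 < s < eta /\ s < t/2).
    { unfold s. pose proof (Rmin_l eta (t/2)). pose proof (Rmin_r eta (t/2)).
      pose proof (Rmin_glb_lt eta (t/2) 0 He ltac:(lra)). lra. }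
    specialize (Heta s ltac:(lra)). specialize (Hdec s (t/2) ltac:(lra) ltac:(lra)). lra. }
  specialize (Hdec (t/2) t ltac:(lra) ltac:(lra)). lra.
Qed.

Lemma barrier (g : R -> R) :
  (exists d, 0 < d /\ forall t, 0 < t < d -> g t < 0) ->
  (forall t, 0 < t -> exists l, is_derive g t l /\ (g t = 0 -> l < 0)) ->
  forall B, 0 < B -> g B < 0.
Proof.
  intros [d [Hd Hst]] Hder B HB.
  destruct (Rlt_or_le B d) as [HBd|HBd]; [apply Hst; lra|].
  set (a := d/2).
  assert (Ha : 0 < a < B) by (unfold a; lra).
  assert (Hga : g a < 0) by (apply Hst; unfold a; lra).
  set (E := fun x => a <= x <= B /\ forall u, a <= u <= x -> g u < 0).
  assert (Hb : bound E) by (exists B; intros x [Hx _]; lra).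
  assert (Hne : exists x, E x).
  { exists a. split; [lra|]. intros u Hu. replace u with a by lra. auto. }
  destruct (completeness E Hb Hne) as [s [Hub Hlub]].
  assert (Has : a <= s) by (apply Hub; split; [lra|]; intros u Hu; replace u with a by lra; auto).
  assert (HsB : s <= B) by (apply Hlub; intros x [Hx _]; lra).
  assert (Hleft : forall u, a <= u < s -> g u < 0).
  { intros u Hu. apply NNPP. intro Hnot.
    assert (Hup : is_upper_bound E u).
    { intros x [Hx Hx2]. destruct (Rle_or_lt x u) as [h|h]; auto.
      exfalso. apply Hnot. apply Hx2. lra. }
    specialize (Hlub u Hup). lra. }
  destruct (Hder s ltac:(lra)) as [l [Hl Hl0]].
  pose proof (der_cont g s l Hl) as Hcont.
  destruct (Rtotal_order (g s) 0) as [Hneg|[Hz|Hpos]].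
  - destruct (Req_dec s B) as [->|HsB']; auto.
    exfalso. destruct (Hcont (- g s) ltac:(lra)) as [e [He Hce]].
    set (x := Rmin B (s + e/2)).
    assert (Hx : s < x <= B /\ x < s + e).
    { unfold x. pose proof (Rmin_l B (s+e/2)). pose proof (Rmin_r B (s+e/2)).
      pose proof (Rmin_glb_lt B (s+e/2) s ltac:(lra) ltac:(lra)). lra. }
    assert (HE : E x).
    { split; [lra|]. intros u Hu. destruct (Rlt_or_le u s) as [h|h]; [apply Hleft; lra|].
      assert (Rabs (u - s) < e) by (rewrite Rabs_pos_eq; lra).
      specialize (Hce u H). apply Rabs_def2 in Hce. lra. }
    specialize (Hub x HE). lra.
  - assert (Has' : a < s) by (destruct (Req_dec a s) as [<-|]; [lra|lra]).
    specialize (Hl0 Hz).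
    destruct (der_neg_left g s l Hl Hl0) as [e [He Hce]].
    set (y := s - Rmin e (s - a) / 2).
    assert (Hy : s - e < y < s /\ a <= y).
    { unfold y. pose proof (Rmin_l e (s-a)). pose proof (Rmin_r e (s-a)).
      pose proof (Rmin_glb_lt e (s-a) 0 He ltac:(lra)). lra. }
    specialize (Hce y ltac:(lra)). specialize (Hleft y ltac:(lra)). lra.
  - exfalso. destruct (Hcont (g s) Hpos) as [e [He Hce]].
    destruct (Req_dec a s) as [<-|Has']; [lra|].
    set (y := s - Rmin e (s - a) / 2).
    assert (Hy : s - e < y < s /\ a <= y).
    { unfold y. pose proof (Rmin_l e (s-a)). pose proof (Rmin_r e (s-a)).
      pose proof (Rmin_glb_lt e (s-a) 0 He ltac:(lra)). lra. }
    assert (Rabs (y - s) < e) by (rewrite Rabs_left; lra).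
    specialize (Hce y H). apply Rabs_def2 in Hce. specialize (Hleft y ltac:(lra)). lra.
Qed.
Lemma deriv_eq (f : R -> R) x l l' : is_derive f x l -> l = l' -> is_derive f x l'.
Proof. intros H ->; exact H. Qed.

Lemma d_F (rho : R -> R) (c k gam t r' : R) : 0 < rho t -> is_derive rho t r' ->
  is_derive (fun t => k * (rho t * (ln (rho t) - ln c)) + gam * rho t - t) t
    (k * (r' * (ln (rho t) - ln c) + r') + gam * r' - 1).
Proof.
  intros Hp Hd.
  assert (Hl : is_derive (fun t => ln (rho t)) t (r' * / rho t)).
  { eapply deriv_eq. apply (is_derive_comp ln rho t). apply is_derive_ln; auto. exact Hd.
    reflexivity. }
  eapply deriv_eq.
  apply @is_derive_minus. apply @is_derive_plus. apply @is_derive_scal.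
  apply @is_derive_mult. exact Hd. apply @is_derive_minus. exact Hl. apply is_derive_const.
  intros; apply Rmult_comm.
  apply @is_derive_scal. exact Hd. apply is_derive_id.
  unfold minus, plus, opp, zero, scal, mult, one; simpl. field. lra.
Qed.

Lemma d_G (rho : R -> R) (c t r' : R) : is_derive rho t r' ->
  is_derive (fun t => c - rho t) t (- r').
Proof.
  intros Hd. eapply deriv_eq. apply @is_derive_minus. apply is_derive_const. exact Hd.
  unfold minus, plus, opp, zero; simpl. ring.
Qed.

Lemma right_cont (f: R->R) y: filterlim f (at_right 0) (locally y) ->
  forall eps, 0 < eps -> exists eta, 0 < eta /\ forall t, 0<t<eta -> Rabs (f t - y) < eps.
Proof.
  intros H eps He. apply filterlim_locally with (eps := mkposreal eps He) in H.
  destruct H as [eta Heta]. exists eta. split. apply cond_pos.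
  intros t Ht. assert (Hb : ball 0 eta t).
  { unfold ball; simpl; unfold AbsRing_ball, abs, minus, plus, opp; simpl. rewrite Ropp_0, Rplus_0_r, Rabs_pos_eq; lra. }
  specialize (Heta t Hb ltac:(lra)). revert Heta.
  unfold ball; simpl; unfold AbsRing_ball, abs, minus, plus, opp; simpl. auto.
Qed.
Lemma exp_le x y : x <= y -> exp x <= exp y.
Proof. intros [h|h]. apply Rlt_le, exp_increasing; auto. subst; lra. Qed.

Lemma ln_le x y : 0 < x -> x <= y -> ln x <= ln y.
Proof. intros h [h'|h']. apply Rlt_le, ln_increasing; auto. subst; lra. Qed.

Lemma W0_spec z : 0 < z -> 0 < W0 z /\ W0 z * exp (W0 z) = z.
Proof.
  intros Hz.
  assert (Hex : exists w, -1 < w /\ w * exp w = z).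
  { assert (Hc : continuity (fun w => w * exp w - z)).
    { intro x. apply derivable_continuous_pt. apply ex_derive_Reals_0. auto_derive. auto. }
    assert (Hz1 : 1 + z < exp z) by (apply exp_ineq1; lra).
    destruct (IVT _ 0 z Hc Hz) as [w [Hw1 Hw2]].
    - rewrite exp_0. lra.
    - nra.
    - exists w. split; lra. }
  pose proof (epsilon_spec (inhabits 0) (fun w => -1 < w /\ w * exp w = z) Hex) as [H1 H2].
  unfold W0. split; auto.
  pose proof (exp_pos (epsilon (inhabits 0) (fun w : R => -1 < w /\ w * exp w = z))).
  nra.
Qed.

Lemma exp_nmul n x : exp (INR n * x) = exp x ^ n.
Proof.
  induction n as [|n IH]. simpl. rewrite Rmult_0_l, exp_0. reflexivity.
  rewrite S_INR. replace ((INR n + 1) * x) with (INR n * x + x) by ring.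
  rewrite exp_plus, IH. simpl. ring.
Qed.

Lemma exp94 : 8 < exp (9/4).
Proof.
  replace (9/4) with (INR 18 * (1/8)) by (simpl; field).
  rewrite exp_nmul.
  assert (H : 1 + 1/8 < exp (1/8)) by (apply exp_ineq1; lra).
  apply Rlt_le_trans with ((1 + 1/8)^18).
  - simpl. lra.
  - apply pow_incr. lra.
Qed.

Definition w0 := W0 (2 / (exp 1) ^ 2).

Lemma w0_facts : 0 < w0 < 1/4 /\ rho0 ^ 2 = 1 + 2 / w0 /\ 0 < rho0.
Proof.
  assert (He : 0 < exp 1) by apply exp_pos.
  assert (Hz : 0 < 2 / exp 1 ^ 2) by (apply Rdiv_lt_0_compat; [lra| apply pow_lt; lra]).
  destruct (W0_spec _ Hz) as [Hp Hw]. fold w0 in Hp, Hw.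
  assert (Hexp : exp (w0 + 2) = 2 / w0).
  { rewrite exp_plus. replace (exp 2) with (exp 1 * exp 1) by (rewrite <- exp_plus; f_equal; ring).
    apply (Rmult_eq_reg_l w0); [|lra]. field_simplify; [|lra].
    rewrite Hw. field. lra. }
  assert (Hlt : w0 < 1/4).
  { destruct (Rlt_or_le w0 (1/4)) as [h|h]; auto. exfalso.
    assert (Hm : exp (1/4) <= exp w0) by (apply exp_le; lra).
    pose proof exp94 as H8.
    replace (9/4) with (1/4 + 1 + 1) in H8 by field. rewrite !exp_plus in H8.
    assert (Hq : w0 * exp w0 * (exp 1 * exp 1) = 2).
    { rewrite Hw. field. lra. }
    pose proof (exp_pos (1/4)). nra. }
  assert (Hr : rho0 ^ 2 = 1 + 2 / w0).
  { unfold rho0. fold w0. rewrite Hexp. simpl. rewrite Rmult_1_r, sqrt_sqrt; [reflexivity|].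
    apply Rlt_le, Rplus_lt_0_compat; [lra| apply Rdiv_lt_0_compat; lra]. }
  split; [lra|]. split; auto.
  unfold rho0. apply sqrt_lt_R0. apply Rplus_lt_0_compat; [lra| apply exp_pos].
Qed.

Lemma rho0_sq : 9 < rho0 ^ 2 /\ 3 < rho0.
Proof.
  destruct w0_facts as [[H1 H2] [H3 H4]].
  assert (9 < 1 + 2 / w0).
  { apply Rle_lt_trans with (1 + 2 / (1/4)). lra.
    apply Rplus_lt_compat_l. unfold Rdiv. apply Rmult_lt_compat_l; [lra|].
    apply Rinv_lt_contravar; nra. }
  split. lra. nra.
Qed.

Lemma ode_pos t r : 0 <= t -> 1 < r -> 0 < ode_rhs t r.
Proof.
  intros Ht Hr. unfold ode_rhs.
  assert (H: 1 - 2/(r^2+1) = (r^2-1)/(r^2+1)) by (field; nra).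
  rewrite H. apply Rmult_lt_0_compat; apply Rdiv_lt_0_compat; nra.
Qed.

Lemma lnq r c : 0 < r -> 0 < c -> ln r - ln c <= r / c - 1.
Proof.
  intros Hr Hc. assert (H := exp_ineq1_le (ln r - ln c)).
  unfold Rminus at 2 in H. rewrite exp_plus, exp_Ropp, !exp_ln in H by auto. unfold Rdiv. lra.
Qed.

Lemma ln54 : 1/5 <= ln (5/4).
Proof.
  assert (H := exp_ineq1_le (-(1/5))). rewrite exp_Ropp in H.
  assert (H2 : exp (1/5) <= 5/4).
  { pose proof (exp_pos (1/5)).
    apply (Rmult_le_reg_r (/ exp (1/5))). apply Rinv_0_lt_compat; auto.
    rewrite Rinv_r by lra. nra. }
  rewrite <- (ln_exp (1/5)). apply ln_le; auto. apply exp_pos.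
Qed.

Theorem corollaryG1 (rho : R -> R)
  (Hinit : rho 0 = rho0)
  (Hcont0 : filterlim rho (at_right 0) (locally (rho 0)))
  (Hode : forall b : R, 0 < b -> is_derive rho b (ode_rhs b (rho b))) :
  forall b : R, 0 < b ->
    Rmax rho0 (4 / 5 * (b / (2 * W0 (b / (2 * rho0))))) <= rho b
    /\ rho b <= b / (2 * W0 (b / (2 * rho0))).
Proof.
  destruct rho0_sq as [Hc9 Hc3].
  rewrite Hinit in Hcont0.
  pose proof (right_cont rho rho0 Hcont0) as Hrc.
  set (c := rho0) in *.
  assert (Hgt : forall t, 0 < t -> c < rho t).
  { intros t Ht.
    enough ((fun t => c - rho t) t < 0) by (simpl in H; lra).
    apply (barrier (fun t => c - rho t)); auto.
    - destruct (Hrc (c - 1) ltac:(lra)) as [eta [Heta Hr]].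
      exists eta. split; auto. apply (start_neg (fun t => c - rho t)); auto.
      + intros s Hs. exists (- ode_rhs s (rho s)). split.
        apply (d_G rho c s _ (Hode s ltac:(lra))).
        specialize (Hr s Hs). apply Rabs_def2 in Hr.
        assert (0 < ode_rhs s (rho s)) by (apply ode_pos; lra). lra.
      + intros eps He. destruct (Hrc eps He) as [e [He' Hr']].
        exists e. split; auto. intros s Hs. specialize (Hr' s Hs). apply Rabs_def2 in Hr'. lra.
    - intros s Hs. exists (- ode_rhs s (rho s)). split.
      apply (d_G rho c s _ (Hode s ltac:(lra))).
      intros Hz. assert (rho s = c) by lra. rewrite H.
      assert (0 < ode_rhs s c) by (apply ode_pos; lra). lra. }
  set (g2 := fun t => 2 * (rho t * (ln (rho t) - ln c)) + 0 * rho t - t).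
  assert (Hd2 : forall t, 0 < t -> is_derive g2 t
     (2 * (ode_rhs t (rho t) * (ln (rho t) - ln c) + ode_rhs t (rho t)) + 0 * ode_rhs t (rho t) - 1)).
  { intros t Ht. apply d_F. pose proof (Hgt t Ht); lra. apply Hode; auto. }
  assert (Hup : forall t, 0 < t -> g2 t < 0).
  { apply barrier.
    - set (kap := 2 / (4 * c^2 + 1)).
      assert (Hk : 0 < kap < 1).
      { unfold kap. split. apply Rdiv_lt_0_compat; nra.
        apply (Rmult_lt_reg_r (4*c^2+1)). nra. unfold Rdiv. rewrite Rmult_assoc, Rinv_l; nra. }
      destruct (Hrc (c * kap) ltac:(nra)) as [eta [Heta Hr]].
      exists eta. split; auto. apply (start_neg g2); auto.
      + intros s Hs. eexists. split. apply Hd2; lra.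
        specialize (Hr s Hs). apply Rabs_def2 in Hr. pose proof (Hgt s ltac:(lra)) as Hcs.
        set (r := rho s) in *. set (l := ln r - ln c).
        assert (Hl0 : 0 <= l) by (unfold l; pose proof (ln_le c r ltac:(lra) ltac:(lra)); lra).
        assert (Hl1 : l <= r / c - 1) by (apply lnq; lra).
        assert (Hrc2 : r / c < 1 + kap).
        { apply (Rmult_lt_reg_r c). lra. unfold Rdiv. rewrite Rmult_assoc, Rinv_l; lra. }
        set (D := 2 / (r^2+1)).
        assert (HD : kap < D).
        { unfold kap, D. unfold Rdiv. apply Rmult_lt_compat_l. lra. assert (r < 2*c) by nra. apply Rinv_lt_contravar; nra. }
        assert (HD1 : D < 1).
        { unfold D. apply (Rmult_lt_reg_r (r^2+1)). nra. unfold Rdiv. rewrite Rmult_assoc, Rinv_l; nra. }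
        set (A := r / (2 * r + s)).
        assert (HA : 0 < A < 1/2).
        { unfold A. split. apply Rdiv_lt_0_compat; lra.
          apply (Rmult_lt_reg_r (2*r+s)). lra. unfold Rdiv. rewrite Rmult_assoc, Rinv_l; lra. }
        unfold ode_rhs. fold A. fold D. fold l.
        assert (HQ : (1 - D) * (l + 1) < 1) by nra.
        assert (HQ' : 2 * A * ((1 - D) * (l + 1)) < 1) by nra.
        nra.
      + intros eps He. destruct (Hrc (Rmin (c*kap) (eps/4)) ltac:(apply Rmin_glb_lt; nra)) as [e [He' Hr']].
        exists (Rmin e eta). split. apply Rmin_glb_lt; lra. intros s Hs.
        assert (Hs1 : 0 < s < e) by (pose proof (Rmin_l e eta); lra).
        assert (Hs2 : 0 < s < eta) by (pose proof (Rmin_r e eta); lra).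
        specialize (Hr' s Hs1). specialize (Hr s Hs2).
        pose proof (Rmin_l (c*kap) (eps/4)). pose proof (Rmin_r (c*kap) (eps/4)).
        apply Rabs_def2 in Hr'. apply Rabs_def2 in Hr. pose proof (Hgt s ltac:(lra)) as Hcs.
        unfold g2. set (r := rho s) in *. set (l := ln r - ln c).
        assert (Hl1 : l <= r / c - 1) by (apply lnq; lra).
        assert (Hr2 : r / c < 2).
        { apply (Rmult_lt_reg_r c). lra. unfold Rdiv. rewrite Rmult_assoc, Rinv_l; nra. }
        assert (Heq : 2 * r * (r / c - 1) = 2 * (r - c) * (r / c)) by (field; lra).
        assert (2 * r * l <= 2 * r * (r / c - 1)) by nra.
        nra.
    - intros s Hs. eexists. split. apply Hd2; auto.
      unfold g2. intros Hz. pose proof (Hgt s Hs) as Hcs.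
      set (r := rho s) in *. set (l := ln r - ln c) in *.
      assert (Hl0 : 0 <= l) by (unfold l; pose proof (ln_le c r ltac:(lra) ltac:(lra)); lra).
      assert (Hs' : s = 2 * r * l) by lra.
      unfold ode_rhs. rewrite Hs'.
      assert (HD : 0 < 2 / (r^2+1)) by (apply Rdiv_lt_0_compat; nra).
      replace (2 * (r / (2 * r + 2 * r * l) * (1 - 2 / (r ^ 2 + 1)) * l +
        r / (2 * r + 2 * r * l) * (1 - 2 / (r ^ 2 + 1))) +
        0 * (r / (2 * r + 2 * r * l) * (1 - 2 / (r ^ 2 + 1))) - 1) with (- (2 / (r^2+1))).
      lra. field. split; nra. }
  set (gam := (c^2 - 9) / (2 * (c^2 - 9) + 8)).
  assert (Hgam : 0 < gam /\ 4 * gam < c^2 - 9 /\ gam < 1/2).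
  { assert (E : gam * (2 * (c^2 - 9) + 8) = c^2 - 9) by (unfold gam; field; lra).
    assert (0 < gam) by (unfold gam; apply Rdiv_lt_0_compat; lra).
    split; [auto|]. split; nra. }
  set (g3 := fun t => - (5/2 * (rho t * (ln (rho t) - ln c)) + gam * rho t - t)).
  assert (Hd3 : forall t, 0 < t -> is_derive g3 t
     (- (5/2 * (ode_rhs t (rho t) * (ln (rho t) - ln c) + ode_rhs t (rho t)) + gam * ode_rhs t (rho t) - 1))).
  { intros t Ht. unfold g3. apply @is_derive_opp. apply d_F. pose proof (Hgt t Ht); lra. apply Hode; auto. }
  assert (Hlo : forall t, 0 < t -> g3 t < 0).
  { apply barrier.
    - exists (gam * c). split. nra. intros s Hs. pose proof (Hgt s ltac:(lra)) as Hcs.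
      unfold g3. set (r := rho s) in *. set (l := ln r - ln c).
      assert (Hl0 : 0 <= l) by (unfold l; pose proof (ln_le c r ltac:(lra) ltac:(lra)); lra).
      nra.
    - intros s Hs. eexists. split. apply Hd3; auto.
      unfold g3. intros Hz. pose proof (Hgt s Hs) as Hcs.
      set (r := rho s) in *. set (l := ln r - ln c) in *.
      assert (Hl0 : 0 <= l) by (unfold l; pose proof (ln_le c r ltac:(lra) ltac:(lra)); lra).
      assert (Hl1 : l <= r / c - 1) by (apply lnq; lra).
      assert (Hs' : s = 5/2 * r * l + gam * r) by lra.
      set (P := 5/2 * l + 5/2 + gam).
      set (M := P - 1/2).
      assert (HM : 0 < M) by (unfold M, P; lra).
      assert (Hkey : 4 * P < r^2 + 1).
      { assert (Hrc10 : 10 * (r / c - 1) <= r^2 - c^2).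
        { assert (Heq : 10 * (r / c - 1) = (r - c) * (10 / c)) by (field; lra).
          assert (H10 : 10 / c < 2 * c).
          { apply (Rmult_lt_reg_r c). lra. unfold Rdiv. rewrite Rmult_assoc, Rinv_l; nra. }
          nra. }
        unfold P. lra. }
      set (D := 2 / (r^2+1)).
      assert (HDP : D * P < 1/2).
      { assert (E : D * P * (r^2+1) = 2 * P) by (unfold D; field; nra). nra. }
      unfold ode_rhs. fold D.
      assert (HA : r / (2 * r + s) = / M) by (rewrite Hs'; unfold M, P; field; nra).
      rewrite HA.
      replace (- (5 / 2 * (/ M * (1 - D) * l + / M * (1 - D)) + gam * (/ M * (1 - D)) - 1))
        with (- (((1 - D) * P - M) / M)) by (unfold P; field; lra).
      assert (0 < ((1 - D) * P - M) / M) by (apply Rdiv_lt_0_compat; unfold M in *; nra).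
      lra. }
  intros b Hb.
  assert (Hz : 0 < b / (2 * c)) by (apply Rdiv_lt_0_compat; lra).
  destruct (W0_spec _ Hz) as [Hw0 Hw].
  set (w := W0 (b / (2 * c))) in *.
  set (U := b / (2 * w)).
  assert (HU : U = c * exp w).
  { unfold U. apply (Rmult_eq_reg_l w); [|lra]. rewrite <- Rmult_assoc, (Rmult_comm w c), Rmult_assoc, Hw.
    field. lra. }
  assert (HbU : b = 2 * U * w) by (unfold U; field; lra).
  pose proof (Hgt b Hb) as Hcb. pose proof (exp_pos w) as Hew.
  set (r := rho b) in *.
  assert (Hr0 : 0 < r) by lra.
  set (l := ln r - ln c).
  assert (Hl0 : 0 <= l) by (unfold l; pose proof (ln_le c r ltac:(lra) ltac:(lra)); lra).
  assert (Hupper : r <= U).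
  { specialize (Hup b Hb). unfold g2 in Hup. fold r l in Hup.
    destruct (Rle_or_lt r U) as [h|h]; auto. exfalso.
    set (x := b / (2 * r)).
    assert (Hx : x * (2 * r) = b) by (unfold x; field; lra).
    assert (Hxw : x < w) by nra.
    assert (Hlx : l < x) by nra.
    assert (Hlnr : ln r < ln c + x) by (unfold l in Hlx; lra).
    apply exp_increasing in Hlnr. rewrite exp_plus, !exp_ln in Hlnr by lra.
    assert (exp x < exp w) by (apply exp_increasing; auto).
    nra. }
  split; [|exact Hupper].
  apply Rmax_lub; [lra|].
  specialize (Hlo b Hb). unfold g3 in Hlo. fold r l in Hlo.
  destruct (Rle_or_lt (4/5 * U) r) as [h|h]; auto. exfalso.
  pose proof ln54 as H54.
  assert (Hln : ln (5/4 * r) < ln (c * exp w)) by (rewrite <- HU; apply ln_increasing; lra).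
  rewrite !ln_mult, ln_exp in Hln by (try apply exp_pos; lra).
  assert (H1 : l + ln (5/4) < w) by (unfold l; lra).
  assert (H2 : 5/2 * r * (l + ln (5/4)) < 5/2 * r * w) by nra.
  assert (H3 : 5/2 * r * w < 2 * U * w) by nra.
  nra.
Qed.
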